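(* Let $S\subset\mathbb{R}^d$ be a nonempty compact convex set with diameter $D:=\sup_{x,y\in S}\|x-y\|$, and let $f$ be differentiable on $S$ with $L$-Lipschitz gradient on $S$ (not necessarily convex). Let $G:=\sup_{x\in S}\|\nabla f(x)\|<\infty$, fix $C\ge\max\{LD^2,\,GD\}$ with $C>0$, and let $f^*:=\inf_{x\in S}f(x)$. Let $\delta\ge0$ and suppose that for every $x\in S$ a vector $g_\delta(x)\in\mathbb{R}^d$ is available with \[ \big|\langle \nabla f(x)-g_\delta(x),\,s-x\rangle\big|\le\delta\quad\text{for all } s\in S. \] Given $x^0\in S$, define iterates for $k=0,1,2,\dots$ by choosing $s^k\in\arg\min_{s\in S}\langle g_\delta(x^k),\,s-x^k\rangle$, setting $\tilde g_k:=\langle g_\delta(x^k),\,x^k-s^k\rangle$, $\overline\alpha_k:=(\tilde g_k-\delta)_+/C$ where $(u)_+:=\max\{u,0\}$, and $x^{k+1}:=x^k+\overline\alpha_k(s^k-x^k)$. Let $\mathcal{G}(x):=\max_{s\in S}\langle\nabla f(x),\,x-s\rangle$ denote the Frank–Wolfe gap. Then for every $K\ge0$, \[ \min_{0\le k\le K}\mathcal{G}(x^k)\le\sqrt{\frac{2C\,(f(x^0)-f^* )}{K+1}}+2\delta . \] In particular, for any $\varepsilon>2\delta$, $\min_{0\le k\le K}\mathcal{G}(x^k)\le\varepsilon$ holds whenever \[ K+1\ge\frac{2C\,(f(x^0)-f^* )}{(\varepsilon-2\delta)^2}. \]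
   Context: $\|\cdot\|$ is the Euclidean norm and $\langle\cdot,\cdot\rangle$ the Euclidean inner product. (In the paper the Frank–Wolfe gap is denoted $G(x)$; here it is written $\mathcal{G}(x)$ to distinguish it from the gradient bound $G$.) *)

(* Defs.v *)
From HB Require Import structures.
From mathcomp Require Import all_boot all_order all_algebra.
From mathcomp Require Import all_classical all_reals all_analysis.
Set Implicit Arguments. Unset Strict Implicit. Unset Printing Implicit Defensive.
Import Order.TTheory GRing.Theory Num.Theory.
Import numFieldNormedType.Exports.
Local Open Scope classical_set_scope.
Local Open Scope ring_scope.

Definition inner (R : realType) (d : nat) (u v : 'rV[R]_d) : R :=
  \sum_(i < d) u 0 i * v 0 i.

Definition enorm (R : realType) (d : nat) (u : 'rV[R]_d) : R :=
  Num.sqrt (inner u u).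

Definition diam (R : realType) (d : nat) (S : set 'rV[R]_d) : R :=
  sup [set enorm (x - y) | x in S & y in S].

Definition is_gradient_on (R : realType) (d : nat) (S : set 'rV[R]_d)
  (f : 'rV[R]_d -> R) (grad : 'rV[R]_d -> 'rV[R]_d) : Prop :=
  forall x, S x -> differentiable f x /\ forall v, 'd f x v = inner (grad x) v.

Definition fw_gap (R : realType) (d : nat) (S : set 'rV[R]_d)
  (grad : 'rV[R]_d -> 'rV[R]_d) (x : 'rV[R]_d) : R :=
  sup [set inner (grad x) (x - s) | s in S].

Definition pos_part (R : realType) (u : R) : R := Num.max u 0.

Definition min_upto (R : realType) (a : nat -> R) (K : nat) : R :=
  \big[Num.min/a 0%N]_(0 <= k < K.+1) a k.

(* Main.v *)
Require Import Defs.
From HB Require Import structures.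
From mathcomp Require Import all_boot all_order all_algebra.
From mathcomp Require Import all_classical all_reals all_analysis.
From mathcomp Require Import ring lra.
Import Order.TTheory GRing.Theory Num.Theory.
Import numFieldNormedType.Exports.
Local Open Scope classical_set_scope.
Local Open Scope ring_scope.
Set Implicit Arguments. Unset Strict Implicit. Unset Printing Implicit Defensive.

Section Inner.
Variables (R : realType) (d : nat).
Implicit Types u v w : 'rV[R]_d.

Lemma innerC u v : inner u v = inner v u.
Proof. by apply: eq_bigr => i _; rewrite mulrC. Qed.
Lemma innerDl u v w : inner (u + v) w = inner u w + inner v w.
Proof. by rewrite /inner -big_split; apply: eq_bigr => i _; rewrite mxE mulrDl. Qed.
Lemma innerNl u w : inner (- u) w = - inner u w.
Proof. by rewrite /inner -sumrN; apply: eq_bigr => i _; rewrite mxE mulNr. Qed.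
Lemma innerBl u v w : inner (u - v) w = inner u w - inner v w.
Proof. by rewrite innerDl innerNl. Qed.
Lemma innerZl a u w : inner (a *: u) w = a * inner u w.
Proof. by rewrite /inner mulr_sumr; apply: eq_bigr => i _; rewrite mxE mulrA. Qed.
Lemma innerDr u v w : inner w (u + v) = inner w u + inner w v.
Proof. by rewrite innerC innerDl !(innerC w). Qed.
Lemma innerBr u v w : inner w (u - v) = inner w u - inner w v.
Proof. by rewrite innerC innerBl !(innerC w). Qed.
Lemma innerNr u w : inner w (- u) = - inner w u.
Proof. by rewrite innerC innerNl innerC. Qed.
Lemma innerZr a u w : inner w (a *: u) = a * inner w u.
Proof. by rewrite innerC innerZl innerC. Qed.
Lemma inner_ge0 u : 0 <= inner u u.
Proof. by apply: sumr_ge0 => i _; rewrite -expr2 sqr_ge0. Qed.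

Lemma enorm_ge0 u : 0 <= enorm u.
Proof. exact: sqrtr_ge0. Qed.
Lemma enorm_sqr u : enorm u ^+ 2 = inner u u.
Proof. by rewrite /enorm sqr_sqrtr // inner_ge0. Qed.

Lemma lagrange u v :
  2 * (inner u u * inner v v - inner u v ^+ 2) =
  \sum_(i < d) \sum_(j < d) (u 0 i * v 0 j - u 0 j * v 0 i) ^+ 2.
Proof.
have E : forall i j, (u 0 i * v 0 j - u 0 j * v 0 i) ^+ 2 =
   (u 0 i * u 0 i) * (v 0 j * v 0 j) + (u 0 j * u 0 j) * (v 0 i * v 0 i)
   - 2 * ((u 0 i * v 0 i) * (u 0 j * v 0 j)).
  by move=> i j; ring.
under eq_bigr => i _ do under eq_bigr => j _ do rewrite E.
rewrite /inner.
under eq_bigr => i _ do rewrite sumrB big_split /= -?mulr_sumr -?mulr_suml -?mulr_sumr.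
rewrite sumrB big_split /= -?mulr_suml -?mulr_sumr -?mulr_suml.
rewrite expr2; ring.
Qed.

Lemma cauchy_schwarz u v : `|inner u v| <= enorm u * enorm v.
Proof.
have H : inner u v ^+ 2 <= inner u u * inner v v.
  have : 0 <= 2 * (inner u u * inner v v - inner u v ^+ 2).
    by rewrite lagrange; apply: sumr_ge0 => i _; apply: sumr_ge0 => j _; apply: sqr_ge0.
  lra.
rewrite /enorm -sqrtrM ?inner_ge0 // -sqrtr_sqr.
by rewrite ler_sqrt // mulr_ge0 // inner_ge0.
Qed.

Lemma inner_le u v : inner u v <= enorm u * enorm v.
Proof. exact: le_trans (ler_norm _) (cauchy_schwarz u v). Qed.

Lemma enormZ a u : enorm (a *: u) = `|a| * enorm u.
Proof.
by rewrite /enorm innerZl innerZr mulrA -expr2 sqrtrM ?sqr_ge0 // sqrtr_sqr.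
Qed.
End Inner.
Lemma conv_in (R : realType) (d : nat) (S : set 'rV[R]_d) x y t :
  convex_set (S : set (convex_lmodType 'rV[R]_d)) -> S x -> S y -> 0 <= t -> t <= 1 ->
  S (x + t *: (y - x)).
Proof.
move=> cS Sx Sy t0 t1.
have := cS y x (Itv01 t0 t1) (mem_set Sy) (mem_set Sx).
move/set_mem.
rewrite /conv /=.
rewrite /unstable.onem => H; suff -> : x + t *: (y - x) = t *: y + (1 - t) *: x by []. by rewrite scalerBr scalerBl scale1r addrC (addrC x) addrA.
Qed.
Lemma line_derivable (R : realType) (d : nat) (f : 'rV[R]_d -> R) x v t :
  derivable (fun r : R => f (x + r *: v)) t 1 = derivable f (x + t *: v) v.
Proof.
rewrite /derivable; set g1 := fun h => h^-1 *: _; set g2 := fun h => h^-1 *: _.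
suff -> : g1 = g2 by []. apply: funext => h; rewrite /g1 /g2 /=.
by rewrite [h%:A]mulr1 scalerDl addrCA (addrC x) addrA.
Qed.

Lemma line_derive (R : realType) (d : nat) (f : 'rV[R]_d -> R) x v t :
  'D_1 (fun r : R => f (x + r *: v)) t = 'D_v f (x + t *: v).
Proof.
rewrite /derive; set g1 := fun h => h^-1 *: _; set g2 := fun h => h^-1 *: _.
suff -> : g1 = g2 by []. apply: funext => h; rewrite /g1 /g2 /=.
by rewrite [h%:A]mulr1 scalerDl addrCA (addrC x) addrA.
Qed.

Lemma poly_der (R : realType) (A B t : R) :
  is_derive t 1 (fun s : R => s * (A + s * B)) (A + 2 * t * B).
Proof.
have H1 := is_deriveD (is_derive_cst A t (1:R)) (is_deriveZ B (is_derive_id t (1:R))).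
have H := is_deriveM (is_derive_id t (1:R)) H1.
have -> : (fun s : R => s * (A + s * B)) = ((id : R -> R) * (cst A + B \*: id)).
  apply: funext => s /=. transitivity (s * (A + B * s)); first by rewrite (mulrC s B). reflexivity.
apply: (is_derive_eq H).
rewrite /GRing.scale /= !mulr1 add0r.
transitivity (t * B + (A + B * t)); first reflexivity.
ring.
Qed.

Lemma descent (R : realType) (d : nat) (S : set 'rV[R]_d) f grad (L : R) x y (a : R) :
  convex_set (S : set (convex_lmodType 'rV[R]_d)) -> is_gradient_on S f grad ->
  (forall y z, S y -> S z -> enorm (grad y - grad z) <= L * enorm (y - z)) ->
  S x -> S y -> 0 <= a -> a <= 1 ->
  f (x + a *: (y - x)) <= f x + a * inner (grad x) (y - x)
     + a * (a * (L * enorm (y - x) ^+ 2 / 2)).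
Proof.
move=> cS Hg HL Sx Sy a0 a1.
set v := y - x.
have Sl : forall t : R, 0 <= t -> t <= 1 -> S (x + t *: v).
  by move=> t t0 t1; apply: conv_in.
have dphi : forall t : R, 0 <= t -> t <= 1 ->
    is_derive t 1 (fun r : R => f (x + r *: v)) (inner (grad (x + t *: v)) v).
  move=> t t0 t1; have [df dv] := Hg _ (Sl t t0 t1).
  have dr : derivable (fun r : R => f (x + r *: v)) t 1.
    by rewrite line_derivable; exact: diff_derivable.
  apply: is_derive_eq (derivableP dr) _.
  by rewrite line_derive deriveE // dv.
set A := inner (grad x) v; set B := L * enorm v ^+ 2 / 2.
pose psi := fun r : R => f (x + r *: v) - r * (A + r * B).
pose df := fun t : R => inner (grad (x + t *: v)) v - (A + 2 * t * B).
have dpsi : forall t : R, 0 <= t -> t <= 1 -> is_derive t 1 psi (df t).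
  move=> t t0 t1; exact: (is_deriveB (dphi t t0 t1) (poly_der A B t)).
have H1 : forall t, t \in `]0, a[ -> is_derive t 1 psi (df t).
  move=> t; rewrite in_itv /= => /andP[t0 t1]; apply: dpsi; first exact: ltW.
  exact: ltW (lt_le_trans t1 a1).
have H2 : {within `[0, a], continuous psi}.
  apply: derivable_within_continuous => t; rewrite in_itv /= => /andP[t0 t1].
  by have [] := dpsi t t0 (le_trans t1 a1).
have [c] := MVT_segment a0 H1 H2.
rewrite in_itv /= => /andP[c0 ca] Heq.
have c1 : c <= 1 by exact: le_trans ca a1.
have dfc : df c <= 0.
  rewrite /df /B /A.
  have : inner (grad (x + c *: v)) v - inner (grad x) v <= L * c * enorm v ^+ 2.
    rewrite -innerBl innerC.
    apply: le_trans (inner_le _ _) _.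
    have := HL _ _ (Sl c c0 c1) Sx.
    rewrite (addrC x) addrK enormZ ger0_norm // mulrA => h.
    rewrite mulrC expr2 mulrA; apply: ler_wpM2r => //; exact: enorm_ge0.
  lra.
have : psi a - psi 0 <= 0.
  by rewrite Heq subr0; apply: mulr_le0_ge0.
rewrite /psi scale0r addr0 !mul0r subr0.
lra.
Qed.

Lemma compact_ex_bound (R : realType) (V : normedModType R) (A : set V) :
  compact A -> exists M : R, forall y, A y -> `|y| <= M.
Proof.
move=> /compact_bounded [M [Mr HM]].
exists (M + 1); move=> y Ay; apply: (HM (M + 1)) => //.
by rewrite ltrDl.
Qed.

Lemma enorm_le_entry (R : realType) (d : nat) (u : 'rV[R]_d) (K : R) :
  (forall i, `|u 0 i| <= K) -> enorm u <= Num.sqrt (d%:R * (K * K)).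
Proof.
move=> Hu; rewrite /enorm ler_sqrt; last by rewrite mulr_ge0 // -expr2 sqr_ge0.
have H : forall i : 'I_d, u 0 i * u 0 i <= K * K.
  move=> i; apply: le_trans (ler_norm _) _; rewrite normrM.
  by apply: ler_pM => //; exact: normr_ge0.
apply: le_trans (ler_sum _ (fun i _ => H i)) _.
by rewrite sumr_const card_ord mulr_natl.
Qed.

Lemma entry_le_mx_norm (R : realType) (d : nat) (u : 'rV[R]_d) i :
  `|u 0 i| <= `|u|.
Proof.
rewrite /Num.norm /= mx_normrE.
by apply: le_trans (le_bigmax _ _ (ord0, i)) => /=.
Qed.

Lemma diam_ub (R : realType) (d : nat) (S : set 'rV[R]_d) :
  compact S -> has_ubound [set enorm (x - y) | x in S & y in S].
Proof.
move=> /compact_ex_bound [M HM].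
exists (Num.sqrt (d%:R * ((M + M) * (M + M)))) => r [x Sx [y Sy <-]].
apply: enorm_le_entry => i; rewrite mxE.
rewrite mxE; apply: le_trans (ler_normB _ _) _.
apply: lerD; apply: le_trans (entry_le_mx_norm _ _) _; [exact: HM | exact: HM].
Qed.

Lemma f_lb (R : realType) (d : nat) (S : set 'rV[R]_d) f grad :
  compact S -> is_gradient_on S f grad -> has_lbound [set f y | y in S].
Proof.
move=> cS Hg.
have cf : {within S, continuous f}.
  apply: continuous_in_subspaceT => y /set_mem Sy.
  exact: differentiable_continuous (Hg y Sy).1.
have [M HM] := compact_ex_bound (continuous_compact cf cS).
exists (- M) => r [y Sy <-].
have := HM (f y) (ex_intro2 _ _ y Sy erefl).
by rewrite ler_norml => /andP[].
Qed.

Lemma argmin_ex (R : realType) (p : nat -> R) K :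
  exists j, (j <= K)%N /\ forall k, (k <= K)%N -> p j <= p k.
Proof.
elim: K => [|K [j [jK jmin]]].
  by exists 0%N; split => // k; rewrite leqn0 => /eqP ->.
have [h|h] := leP (p j) (p K.+1).
  exists j; split; first exact: leqW.
  move=> k; rewrite leq_eqVlt => /orP[/eqP -> //|]; rewrite ltnS; exact: jmin.
exists K.+1; split => // k; rewrite leq_eqVlt => /orP[/eqP -> //|]; rewrite ltnS => kK.
exact: le_trans (ltW h) (jmin k kK).
Qed.

Lemma min_upto_le (R : realType) (a : nat -> R) K j : (j <= K)%N -> min_upto a K <= a j.
Proof.
move=> jK; rewrite /min_upto; apply: ge_bigmin_seq => //.
by rewrite mem_index_iota ltnS jK.
Qed.

Unset Implicit Arguments.
Unset Strict Implicit.

Theorem theorem2 (R : realType) (d : nat) (S : set 'rV[R]_d)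
  (f : 'rV[R]_d -> R) (grad : 'rV[R]_d -> 'rV[R]_d) (L C delta : R)
  (g : 'rV[R]_d -> 'rV[R]_d) (x s : nat -> 'rV[R]_d) :
  S !=set0 -> compact S -> convex_set (S : set (convex_lmodType 'rV[R]_d)) ->
  is_gradient_on S f grad ->
  0 <= L ->
  (forall y z, S y -> S z -> enorm (grad y - grad z) <= L * enorm (y - z)) ->
  (* G := sup_{x in S} ||grad f(x)|| < oo *)
  has_ubound [set enorm (grad y) | y in S] ->
  0 < C ->
  L * diam S ^+ 2 <= C ->
  sup [set enorm (grad y) | y in S] * diam S <= C ->
  0 <= delta ->
  (forall y z, S y -> S z -> `|inner (grad y - g y) (z - y)| <= delta) ->
  S (x 0%N) ->
  (forall k, S (s k) /\
     forall z, S z -> inner (g (x k)) (s k - x k) <= inner (g (x k)) (z - x k)) ->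
  (forall k, x k.+1 =
     x k + (pos_part (inner (g (x k)) (x k - s k) - delta) / C) *: (s k - x k)) ->
  let fstar := inf [set f y | y in S] in
  (forall K : nat,
     min_upto (fun k => fw_gap S grad (x k)) K <=
       Num.sqrt (2 * C * (f (x 0%N) - fstar) / K.+1%:R) + 2 * delta) /\
  (forall (eps : R) (K : nat), 2 * delta < eps ->
     2 * C * (f (x 0%N) - fstar) / (eps - 2 * delta) ^+ 2 <= K.+1%:R ->
     min_upto (fun k => fw_gap S grad (x k)) K <= eps).
Proof.
move=> S0 cS cvS Hg L0 HL HG C0 HLD HGD d0 Hd Sx0 Hs Hx fstar.
set D := diam S; set G := sup [set enorm (grad y) | y in S].
have HD := diam_ub cS.
have enD : forall y z, S y -> S z -> enorm (y - z) <= D.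
  by move=> y z Sy Sz; apply: (ub_le_sup HD); exists y => //; exists z.
have enG : forall y, S y -> enorm (grad y) <= G.
  by move=> y Sy; apply: (ub_le_sup HG); exists y.
have D0 : 0 <= D by apply: le_trans (enorm_ge0 _) (enD _ _ Sx0 Sx0).
have G0 : 0 <= G by apply: le_trans (enorm_ge0 _) (enG _ Sx0).
pose gt k := inner (g (x k)) (x k - s k).
pose P k := pos_part (gt k - delta).
have P0 : forall k, 0 <= P k by move=> k; rewrite /P /pos_part le_max lexx orbT.
have Pge : forall k, gt k - delta <= P k by move=> k; rewrite /P /pos_part le_max lexx.
have PP : forall k, P k * (gt k - delta) = P k * P k.
  move=> k; rewrite /P /pos_part; have [h|h] := leP (gt k - delta) 0.
    by rewrite ?max_r // !mul0r.
  by rewrite ?max_l // ltW.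
have A1 : forall k, S (x k) -> gt k - delta <= C.
  move=> k Sy; have Sz := (Hs k).1.
  have := Hd _ _ Sy Sz; rewrite innerBl !innerBr ler_norml => /andP[h1 h2].
  have h3 : inner (grad (x k)) (x k - s k) <= C.
    apply: le_trans (inner_le _ _) _; apply: le_trans HGD.
    by apply: ler_pM; [exact: enorm_ge0|exact: enorm_ge0|exact: enG|exact: enD].
  move: h3; rewrite /gt !innerBr; lra.
have al0 : forall k, 0 <= P k / C by move=> k; rewrite divr_ge0 // ltW.
have al1 : forall k, S (x k) -> P k / C <= 1.
  move=> k Sy; rewrite ler_pdivrMr // mul1r /P /pos_part ge_max A1 //=; exact: ltW.
have Xk : forall k, S (x k).
  elim=> // k IH; rewrite Hx; apply: conv_in; [exact: cvS|exact: IH|exact: (Hs k).1|exact: al0|exact: al1].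
have step : forall k, P k * P k / C <= 2 * (f (x k) - f (x k.+1)).
  move=> k; have Sy := Xk k; have Sz := (Hs k).1.
  have hdes := descent cvS Hg HL Sy Sz (al0 k) (al1 k Sy).
  rewrite -/(P k) -Hx in hdes.
  have := Hd _ _ Sy Sz; rewrite innerBl !innerBr ler_norml => /andP[h1 h2].
  have hq : inner (grad (x k)) (s k - x k) <= - (gt k - delta).
    rewrite /gt !innerBr; lra.
  have hBC : L * enorm (s k - x k) ^+ 2 / 2 <= C / 2.
    rewrite ler_pdivrMr // divfK ?pnatr_eq0 //; apply: le_trans HLD.
    apply: ler_wpM2l => //; rewrite !expr2.
    by apply: ler_pM; [exact: enorm_ge0|exact: enorm_ge0|exact: enD|exact: enD].
  have hA := ler_wpM2l (al0 k) hq.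
  have hB := ler_wpM2l (al0 k) (ler_wpM2l (al0 k) hBC).
  have e1 : P k / C * - (gt k - delta) = - (P k * P k / C).
    by rewrite mulrN mulrAC PP.
  have e2 : P k / C * (P k / C * (C / 2)) = P k * P k / C / 2.
    by field; rewrite gt_eqF.
  lra.
have Tel : forall n, \sum_(k < n) P k * P k / C <= 2 * (f (x 0%N) - f (x n)).
  elim=> [|n IH]; first by rewrite big_ord0 subrr mulr0.
  rewrite big_ord_recr /=; have := step n; lra.
have gap : forall k, fw_gap S grad (x k) <= P k + 2 * delta.
  move=> k; have Sy := Xk k; have Sz := (Hs k).1.
  rewrite /fw_gap; apply: ge_sup.
    by exists (inner (grad (x k)) (x k - x k)); exists (x k).
  move=> r [w Sw <-].
  have := Hd _ _ Sy Sw; rewrite innerBl !innerBr ler_norml => /andP[h1 h2].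
  have := (Hs k).2 w Sw; rewrite !innerBr => h3.
  have := Pge k; rewrite /gt !innerBr => h4.
  lra.
have part1 : forall K : nat,
     min_upto (fun k => fw_gap S grad (x k)) K <=
       Num.sqrt (2 * C * (f (x 0%N) - fstar) / K.+1%:R) + 2 * delta.
  move=> K; have [j [jK jmin]] := argmin_ex P K.
  have fs : fstar <= f (x K.+1).
    by apply: (ge_inf (f_lb cS Hg)); exists (x K.+1).
  have S1 : K.+1%:R * (P j * P j / C) <= 2 * (f (x 0%N) - fstar).
    have T := Tel K.+1.
    suff : K.+1%:R * (P j * P j / C) <= \sum_(k < K.+1) P k * P k / C by lra.
    apply: le_trans (_ : \sum_(k < K.+1) P j * P j / C <= _).
      by rewrite sumr_const card_ord mulr_natl.
    apply: ler_sum => k _; apply: ler_wpM2r; first by rewrite invr_ge0 ltW.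
    by apply: ler_pM => //; apply: jmin; rewrite -ltnS.
  have S2 : P j * P j <= 2 * C * (f (x 0%N) - fstar) / K.+1%:R.
    rewrite ler_pdivlMr ?ltr0Sn //.
    have := ler_wpM2l (ltW C0) S1.
    have -> : C * (K.+1%:R * (P j * P j / C)) = P j * P j * K.+1%:R.
      by field; rewrite gt_eqF.
    lra.
  have S3 : P j <= Num.sqrt (2 * C * (f (x 0%N) - fstar) / K.+1%:R).
    rewrite -(ger0_norm (P0 j)) -sqrtr_sqr ler_sqrt ?expr2 //.
    by apply: le_trans S2; rewrite -expr2 sqr_ge0.
  apply: le_trans (min_upto_le _ jK) _.
  apply: le_trans (gap j) _; lra.
split => // eps K he hK.
apply: le_trans (part1 K) _.
have e0 : 0 < eps - 2 * delta by lra.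
suff : Num.sqrt (2 * C * (f (x 0%N) - fstar) / K.+1%:R) <= eps - 2 * delta by lra.
rewrite -(ger0_norm (ltW e0)) -sqrtr_sqr ler_sqrt ?sqr_ge0 //.
rewrite ler_pdivrMr ?exprn_gt0 // in hK.
by rewrite ler_pdivrMr ?ltr0Sn // (mulrC (_ ^+ 2)).
Qed.
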